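(* Let $\mathcal H$ be a complex Hilbert space with $\dim\mathcal H\ge n$, let $c=(c_1,\dots,c_n)$ and $\|A\|_c=\sum_{j=1}^n c_js_j(A)$ for $A\in\mathcal B(\mathcal H)$. For parts (a), (b), (c), (e) assume $c$ has positive entries arranged in descending order $c_1\ge\cdots\ge c_n>0$. (a) $\|\cdot\|_c$ is submultiplicative ($\|AB\|_c\le\|A\|_c\|B\|_c$ for all $A,B$) if and only if $c_1\ge1$. (b) $\|\cdot\|_c$ is a cross norm ($\|A\|_c=s_1(A)$ for every rank one $A$) if and only if $c_1=1$. (c) Suppose $c_1\ge1$. There exist nonzero $A,B\in\mathcal B(\mathcal H)$ with $\|AB\|_c=\|A\|_c\|B\|_c$ if and only if $c_1=1$. (d) Suppose $c=(1,0,\dots,0)$. Two nonzero operators $A,B\in\mathcal B(\mathcal H)$ satisfy $\|AB\|_c=\|A\|_c\|B\|_c$ if and only if $s_1(AB)=s_1(A)s_1(B)$. (e) Suppose $n\ge2$, $c_1=1$ and $c_2>0$. Two nonzero operators $A,B\in\mathcal B(\mathcal H)$ satisfy $\|AB\|_c=\|A\|_c\|B\|_c$ if and only if $A=xy^*$ and $B=yz^*$ for some nonzero vectors $x,y,z\in\mathcal H$.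
   Context: $\mathcal B(\mathcal H)$ is the algebra of bounded linear operators on $\mathcal H$; $s_k(A)=\inf\{\|A-X\|_{\rm sp}:\operatorname{rank}X<k\}$ is the $k$th singular value, with $\|\cdot\|_{\rm sp}$ the operator norm. $xy^*$ denotes the operator $v\mapsto\langle v,y\rangle x$. *)

(* Defs.v *)
From HB Require Import structures.
From mathcomp Require Import all_boot all_order all_algebra.
From mathcomp Require Import classical_sets reals complex.
Set Implicit Arguments. Unset Strict Implicit. Unset Printing Implicit Defensive.
Import Order.TTheory GRing.Theory Num.Theory.
Local Open Scope classical_set_scope.
Local Open Scope ring_scope.

Section HilbertDefs.
Variables (R : realType) (V : lmodType R[i]) (ip : V -> V -> R[i]).

Definition inner_product : Prop :=
  [/\ forall (a : R[i]) (u v w : V), ip (a *: u + v) w = a * ip u w + ip v w,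
      forall u v, ip u v = (ip v u)^*,
      forall v, 0 <= ip v v &
      forall v, ip v v = 0 -> v = 0].

Definition hnorm (v : V) : R := Num.sqrt (complex.Re (ip v v)).

Definition hcomplete : Prop :=
  forall u : nat -> V,
    (forall e : R, 0 < e -> exists N : nat, forall m k : nat,
        (N <= m)%N -> (N <= k)%N -> hnorm (u m - u k) < e) ->
    exists l : V, forall e : R, 0 < e -> exists N : nat, forall k : nat,
        (N <= k)%N -> hnorm (u k - l) < e.

Definition hdim_ge (n : nat) : Prop :=
  exists w : 'I_n -> V, forall a : 'I_n -> R[i],
    \sum_(i < n) a i *: w i = 0 -> forall i, a i = 0.

Definition bop (A : V -> V) : Prop :=
  (forall (a : R[i]) (u v : V), A (a *: u + v) = a *: A u + A v) /\
  exists M : R, forall v, hnorm (A v) <= M * hnorm v.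

Definition opnorm (A : V -> V) : R :=
  sup [set r | exists v, hnorm v <= 1 /\ r = hnorm (A v)].

Definition rank_le (A : V -> V) (m : nat) : Prop :=
  exists w : 'I_m -> V, forall v, exists a : 'I_m -> R[i],
    A v = \sum_(i < m) a i *: w i.

Definition nonzero_op (A : V -> V) : Prop := exists v, A v <> 0.

Definition rank_one (A : V -> V) : Prop := rank_le A 1 /\ nonzero_op A.

(* sv A k = s_{k+1}(A) = inf { ||A - X||_sp : X in B(H), rank X < k+1 } *)
Definition sv (A : V -> V) (k : nat) : R :=
  inf [set r | exists X : V -> V,
         [/\ bop X, rank_le X k & r = opnorm (fun v => A v - X v)]].

Definition cnorm (n : nat) (c : 'I_n -> R) (A : V -> V) : R :=
  \sum_(j < n) c j * sv A j.

Definition outer (x y : V) : V -> V := fun v => ip v y *: x.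

End HilbertDefs.

(* Main.v *)
Require Import Defs.
From HB Require Import structures.
From mathcomp Require Import all_boot all_order all_algebra.
From mathcomp Require Import classical_sets boolp reals complex.
From mathcomp Require Import ring lra.
Import Order.TTheory GRing.Theory Num.Theory.
Local Open Scope classical_set_scope.
Local Open Scope ring_scope.

Section Scalars.
Context {R : realType}.
Implicit Types z w : R[i].

Definition cmod z : R := Normc.normc z.

Lemma cmodE a b : cmod (a +i* b)%C = Num.sqrt (a^+2 + b^+2).
Proof. by []. Qed.

Lemma cmod_ge0 z : 0 <= cmod z.
Proof. by case: z => a b; rewrite cmodE sqrtr_ge0. Qed.

Lemma cmodM z w : cmod (z * w) = cmod z * cmod w.
Proof. exact: Normc.normcM. Qed.

Lemma cmod_eq0 z : cmod z = 0 -> z = 0.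
Proof. exact: Normc.eq0_normc. Qed.

Lemma cmodD z w : cmod (z + w) <= cmod z + cmod w.
Proof. exact: le_normcD. Qed.

Lemma cmodN z : cmod (- z) = cmod z.
Proof. exact: normcN. Qed.

Lemma cmod_sqr z : cmod z ^+ 2 = complex.Re z ^+ 2 + complex.Im z ^+ 2.
Proof. by case: z => a b; rewrite cmodE sqr_sqrtr // addr_ge0 // sqr_ge0. Qed.

Lemma cmod_conj z : cmod (z^*) = cmod z.
Proof. by case: z => a b; rewrite !cmodE /= sqrrN. Qed.

Lemma mul_conj z : z * z^* = ((cmod z) ^+ 2)%:C%C.
Proof.
rewrite cmod_sqr; case: z => a b /=.
apply/eqP; rewrite eq_complex /=; apply/andP; split; apply/eqP; ring.
Qed.

Lemma cmod_real (a : R) : cmod (a%:C)%C = `|a|.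
Proof. by rewrite cmodE expr0n /= addr0 sqrtr_sqr. Qed.

Lemma Re_le_cmod z : complex.Re z <= cmod z.
Proof.
case: z => a b; rewrite cmodE /=.
apply: le_trans (ler_norm a) _; rewrite -sqrtr_sqr ler_sqrt; last first.
  by apply: addr_ge0; apply: sqr_ge0.
by rewrite lerDl sqr_ge0.
Qed.

Lemma ReD z w : complex.Re (z + w) = complex.Re z + complex.Re w.
Proof. by case: z; case: w. Qed.

Lemma ReM_real (a : R) z : complex.Re (a%:C%C * z) = a * complex.Re z.
Proof. by case: z => x y /=; rewrite mul0r subr0. Qed.

Lemma Re_conj z : complex.Re (z^*) = complex.Re z.
Proof. by case: z. Qed.

End Scalars.

Section IP.
Variables (R : realType) (V : lmodType R[i]) (ip : V -> V -> R[i]).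
Hypothesis Hip : inner_product ip.

Local Notation nsq v := (complex.Re (ip v v)).
Local Notation hnm := (hnorm ip).

Lemma ipL a u v w : ip (a *: u + v) w = a * ip u w + ip v w.
Proof. by case: Hip. Qed.

Lemma ipC u v : ip u v = (ip v u)^*.
Proof. by case: Hip. Qed.

Lemma ip0l w : ip 0 w = 0.
Proof.
have := ipL 1 0 0 w; rewrite scale1r addr0 mul1r => h.
by apply: (addrI (ip 0 w)); rewrite addr0 -h.
Qed.

Lemma ipDl u v w : ip (u + v) w = ip u w + ip v w.
Proof. by rewrite -[u]scale1r ipL mul1r scale1r. Qed.

Lemma ipZl a u w : ip (a *: u) w = a * ip u w.
Proof. by rewrite -[a *: u]addr0 ipL ip0l addr0. Qed.

Lemma ipNl u w : ip (- u) w = - ip u w.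
Proof. by rewrite -scaleN1r ipZl mulN1r. Qed.

Lemma ipBl u v w : ip (u - v) w = ip u w - ip v w.
Proof. by rewrite ipDl ipNl. Qed.

Lemma ip0r w : ip w 0 = 0.
Proof. by rewrite ipC ip0l conjC0. Qed.

Lemma ipDr u v w : ip w (u + v) = ip w u + ip w v.
Proof. by rewrite ipC ipDl rmorphD /= -!ipC. Qed.

Lemma ipZr a u w : ip w (a *: u) = a^* * ip w u.
Proof. by rewrite ipC ipZl rmorphM /= -ipC. Qed.

Lemma ipNr u w : ip w (- u) = - ip w u.
Proof. by rewrite ipC ipNl rmorphN /= -ipC. Qed.

Lemma ipBr u v w : ip w (u - v) = ip w u - ip w v.
Proof. by rewrite ipDr ipNr. Qed.

Lemma ip_sumr (m : nat) (F : 'I_m -> V) w :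
  ip (\sum_(i < m) F i) w = \sum_(i < m) ip (F i) w.
Proof.
elim/big_rec2: _ => [|i x y _ <-]; first by rewrite ip0l.
by rewrite ipDl.
Qed.

Lemma ip_ge0 v : 0 <= ip v v.
Proof. by case: Hip. Qed.

Lemma ip_real v : ip v v = (nsq v)%:C%C.
Proof.
have := ip_ge0 v; case: (ip v v) => a b.
by rewrite lecE /= => /andP [/eqP -> _].
Qed.

Lemma nsq_ge0 v : 0 <= nsq v.
Proof. by have := ip_ge0 v; rewrite lecE => /andP [_]. Qed.

Lemma nsq_eq0 v : nsq v = 0 -> v = 0.
Proof. by move=> h; case: Hip => _ _ _; apply; rewrite ip_real h. Qed.

Lemma nsq0 : nsq 0 = 0.
Proof. by rewrite ip0l. Qed.

Lemma hnE v : hnm v = Num.sqrt (nsq v).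
Proof. by []. Qed.

Lemma hn_ge0 v : 0 <= hnm v.
Proof. exact: sqrtr_ge0. Qed.

Lemma hn2 v : hnm v ^+ 2 = nsq v.
Proof. by rewrite hnE sqr_sqrtr // nsq_ge0. Qed.

Lemma hn_eq0 v : hnm v = 0 -> v = 0.
Proof. by move=> h; apply: nsq_eq0; rewrite -hn2 h expr0n. Qed.

Lemma hn0 : hnm 0 = 0.
Proof. by rewrite hnE nsq0 sqrtr0. Qed.

Lemma hn_gt0 v : v <> 0 -> 0 < hnm v.
Proof.
move=> nz; rewrite lt_neqAle hn_ge0 andbT; apply/eqP => h.
by apply: nz; apply: hn_eq0.
Qed.

Lemma nsqZ a v : nsq (a *: v) = cmod a ^+ 2 * nsq v.
Proof.
rewrite ipZl ipZr mulrA mul_conj ip_real.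
by rewrite -rmorphM /=.
Qed.

Lemma hnZ a v : hnm (a *: v) = cmod a * hnm v.
Proof.
rewrite !hnE nsqZ sqrtrM ?sqr_ge0 // sqrtr_sqr ger0_norm //.
exact: cmod_ge0.
Qed.

Lemma hnN v : hnm (- v) = hnm v.
Proof.
rewrite -scaleN1r hnZ cmodN.
have -> : (1 : R[i]) = (1%:C)%C by [].
by rewrite cmod_real normr1 mul1r.
Qed.

Lemma hn_sym u v : hnm (u - v) = hnm (v - u).
Proof. by rewrite -hnN opprB. Qed.

Lemma nsqD u v : nsq (u + v) = nsq u + nsq v + 2 * complex.Re (ip u v).
Proof.
rewrite !ipDl !ipDr [ip v u]ipC !ReD Re_conj.
rewrite mulr2n mulrDl mul1r; lra.
Qed.

Lemma CS_aux u v : v <> 0 ->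
  let t := ((nsq v)^-1)%:C%C * ip u v in
  nsq (u - t *: v) = nsq u - cmod (ip u v) ^+ 2 / nsq v.
Proof.
move=> nz t.
have sp : 0 < nsq v by rewrite -hn2 exprn_gt0 // hn_gt0.
rewrite -scaleNr nsqD nsqZ ipZr rmorphN rmorphM /= conj_Creal; last first.
  by apply/complex_realP; exists (nsq v)^-1.
rewrite cmodN cmodM cmod_real ger0_norm ?invr_ge0 ?ltW //.
rewrite mulNr -mulrA [(ip u v)^* * _]mulrC mul_conj -rmorphM /=.
by field; rewrite gt_eqF.
Qed.


Lemma le_sqr_nn (a b : R) : 0 <= a -> 0 <= b -> a ^+ 2 <= b ^+ 2 -> a <= b.
Proof. move=> a0 b0 h; nra. Qed.

Lemma cmod0 : cmod (0 : R[i]) = 0.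
Proof. by rewrite -[0 : R[i]]/((0%:C)%C) cmod_real normr0. Qed.

Lemma CS u v : cmod (ip u v) <= hnm u * hnm v.
Proof.
have [->|nz] := eqVneq v 0.
  by rewrite ip0r cmod0 mulr_ge0 ?hn_ge0.
have nz' : v <> 0 by apply/eqP.
have := CS_aux u v nz'; set t := _ * _ => h.
have sp : 0 < nsq v by rewrite -hn2 exprn_gt0 // hn_gt0.
have := nsq_ge0 (u - t *: v); rewrite h subr_ge0 ler_pdivrMr // => h2.
apply: le_sqr_nn; rewrite ?cmod_ge0 ?mulr_ge0 ?hn_ge0 //.
by rewrite exprMn !hn2.
Qed.

Lemma CS_eq u v : v <> 0 -> cmod (ip u v) = hnm u * hnm v ->
  u = (((nsq v)^-1)%:C%C * ip u v) *: v.
Proof.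
move=> nz e; have := CS_aux u v nz; set t := _ * _ => h.
have sp : 0 < nsq v by rewrite -hn2 exprn_gt0 // hn_gt0.
apply/eqP; rewrite -subr_eq0; apply/eqP; apply: nsq_eq0.
rewrite h e exprMn !hn2 mulfK ?subrr //.
by rewrite gt_eqF.
Qed.

Lemma hnD u v : hnm (u + v) <= hnm u + hnm v.
Proof.
apply: le_sqr_nn; rewrite ?addr_ge0 ?hn_ge0 //.
rewrite hn2 nsqD sqrrD !hn2.
have h1 := Re_le_cmod (ip u v); have h2 := CS u v.
lra.
Qed.

Lemma hnB u v : hnm (u - v) <= hnm u + hnm v.
Proof. by rewrite -(hnN v) hnD. Qed.

Lemma hn_tri u v w : hnm (u - w) <= hnm (u - v) + hnm (v - w).
Proof. by apply: le_trans (hnD _ _); rewrite addrA subrK. Qed.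



Section Ops.
Implicit Types A B X : V -> V.

Lemma bopZD {A} : bop ip A -> forall a u v, A (a *: u + v) = a *: A u + A v.
Proof. by case. Qed.

Lemma bop0 {A} : bop ip A -> A 0 = 0.
Proof.
move=> hA; have := bopZD hA 1 0 0; rewrite !scale1r addr0 => h.
by apply: (addrI (A 0)); rewrite addr0 -h.
Qed.

Lemma bopD {A} : bop ip A -> forall u v, A (u + v) = A u + A v.
Proof. by move=> hA u v; rewrite -[u]scale1r bopZD // !scale1r. Qed.

Lemma bopZ {A} : bop ip A -> forall a u, A (a *: u) = a *: A u.
Proof. by move=> hA a u; rewrite -[a *: u]addr0 bopZD // bop0 // addr0. Qed.

Lemma bopN {A} : bop ip A -> forall u, A (- u) = - A u.
Proof. by move=> hA u; rewrite -scaleN1r bopZ // scaleN1r. Qed.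

Lemma bopB {A} : bop ip A -> forall u v, A (u - v) = A u - A v.
Proof. by move=> hA u v; rewrite bopD // bopN. Qed.

Lemma bop_sum {A} : bop ip A -> forall (m : nat) (F : 'I_m -> V),
  A (\sum_(i < m) F i) = \sum_(i < m) A (F i).
Proof.
move=> hA m F; elim: m F => [|m IH] F; first by rewrite !big_ord0 bop0.
by rewrite !big_ord_recr /= bopD // IH.
Qed.

Definition opset A := [set r : R | exists v, hnm v <= 1 /\ r = hnm (A v)].

Lemma opn_ge0 A : 0 <= opnorm ip A.
Proof.
rewrite /opnorm -/(opset A).
have [ub|nub] := pselect (has_ubound (opset A)).
  apply: le_trans (hn_ge0 (A 0)) _; apply: ub_le_sup => //.
  by exists 0; rewrite hn0.
by rewrite sup_out // => -[_].
Qed.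

Lemma opn_le A M : (forall v, hnm (A v) <= M * hnm v) -> 0 <= M -> opnorm ip A <= M.
Proof.
move=> h M0; apply: ge_sup; first by exists (hnm (A 0)), 0; rewrite hn0 ler01.
move=> r [v [v1 ->]]; apply: le_trans (h v) _.
by rewrite -{2}[M]mulr1 ler_wpM2l.
Qed.

Lemma bop_ub {A} : bop ip A -> has_ubound (opset A).
Proof.
case=> _ [M hM]; exists `|M| => r [v [v1 ->]].
apply: le_trans (hM v) _; apply: le_trans (ler_norm _) _.
by rewrite normrM [`|hnm v|]ger0_norm ?hn_ge0 // ler_piMr.
Qed.

Lemma opn_ge {A v} : bop ip A -> hnm v <= 1 -> hnm (A v) <= opnorm ip A.
Proof. by move=> hA v1; apply: ub_le_sup (bop_ub hA) _ _; exists v. Qed.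

Lemma opn_bound {A} v : bop ip A -> hnm (A v) <= opnorm ip A * hnm v.
Proof.
move=> hA; have [->|nz] := eqVneq v 0; first by rewrite bop0 // hn0 mulr0.
have hp : 0 < hnm v by apply: hn_gt0; apply/eqP.
set w := ((hnm v)^-1)%:C%C *: v.
have hw : hnm w = 1.
  by rewrite hnZ cmod_real ger0_norm ?invr_ge0 ?hn_ge0 // mulVf ?gt_eqF.
have w1 : hnm w <= 1 by rewrite hw.
have := opn_ge hA w1; rewrite bopZ // hnZ cmod_real.
have hi : 0 <= (hnm v)^-1 by rewrite invr_ge0 hn_ge0.
rewrite (ger0_norm hi) mulrC -ler_pdivlMr ?invr_gt0 // invrK mulrC //.
Qed.

Lemma opn_gt0 {A} : bop ip A -> nonzero_op A -> 0 < opnorm ip A.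
Proof.
move=> hA [v nz]; have := opn_bound v hA.
have := hn_gt0 _ nz; have := hn_ge0 v; have := opn_ge0 A.
nra.
Qed.

Lemma opn_eq0 {A} v : opnorm ip A = 0 -> bop ip A -> A v = 0.
Proof.
move=> h hA; apply: hn_eq0; apply/eqP; rewrite eq_le hn_ge0 andbT.
by have := opn_bound v hA; rewrite h mul0r.
Qed.

Lemma bop_comp {A B} : bop ip A -> bop ip B -> bop ip (fun v => A (B v)).
Proof.
move=> hA hB; split; first by move=> a u v; rewrite !bopZD.
exists (opnorm ip A * opnorm ip B) => v.
apply: le_trans (opn_bound _ hA) _; rewrite -mulrA ler_wpM2l ?opn_ge0 //.
exact: opn_bound.
Qed.

Lemma bop_sub {A B} : bop ip A -> bop ip B -> bop ip (fun v => A v - B v).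
Proof.
move=> hA hB; split.
  move=> a u v; rewrite (bopZD hA) (bopZD hB) scalerBr opprD addrACA.
  by rewrite !addrA.
exists (opnorm ip A + opnorm ip B) => v; apply: le_trans (hnB _ _) _.
by rewrite mulrDl lerD // opn_bound.
Qed.

Lemma bop_zero : bop ip (fun _ : V => 0).
Proof.
split; first by move=> a u v; rewrite scaler0 addr0.
by exists 0 => v; rewrite hn0 mul0r.
Qed.

Lemma opn_comp {A B} : bop ip A -> bop ip B ->
  opnorm ip (fun v => A (B v)) <= opnorm ip A * opnorm ip B.
Proof.
move=> hA hB; apply: opn_le; last by rewrite mulr_ge0 ?opn_ge0.
move=> v; apply: le_trans (opn_bound _ hA) _; rewrite -mulrA ler_wpM2l ?opn_ge0 //.
exact: opn_bound.
Qed.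

Lemma opn_zero : opnorm ip (fun _ : V => 0) = 0.
Proof.
apply/eqP; rewrite eq_le opn_ge0 andbT; apply: opn_le => // v.
by rewrite hn0 mul0r.
Qed.

End Ops.

Section SV.
Implicit Types A B X : V -> V.

Lemma rank0 {X} : rank_le X 0 -> forall v, X v = 0.
Proof. by case=> w h v; have [a ->] := h v; rewrite big_ord0. Qed.

Lemma rank_zero k : rank_le (fun _ : V => 0) k.
Proof.
exists (fun _ => 0) => v; exists (fun _ => 0).
by rewrite big1 // => i _; rewrite scaler0.
Qed.

Lemma rank1P X : rank_le X 1 <-> exists w, forall v, exists a, X v = a *: w.
Proof.
split.
  case=> w h; exists (w ord0) => v; have [a ->] := h v.
  by exists (a ord0); rewrite big_ord1.
case=> w h; exists (fun _ => w) => v; have [a ->] := h v.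
by exists (fun _ => a); rewrite big_ord1.
Qed.

Lemma rank1_le X j : rank_le X 1 -> (0 < j)%N -> rank_le X j.
Proof.
move=> /rank1P [w h]; case: j => // j _.
exists (fun i => if val i == 0%N then w else 0) => v; have [a ->] := h v.
exists (fun i => if val i == 0%N then a else 0).
rewrite big_ord_recl /= big1 ?addr0 // => i _.
by rewrite scaler0.
Qed.

Lemma rank_compl A X k : bop ip A -> rank_le X k -> rank_le (fun v => A (X v)) k.
Proof.
move=> hA [w h]; exists (fun i => A (w i)) => v; have [a ->] := h v.
exists a; rewrite bop_sum //; apply: eq_bigr => i _; exact: bopZ.
Qed.

Lemma rank_compr X B k : rank_le X k -> rank_le (fun v => X (B v)) k.
Proof. by move=> [w h]; exists w => v; apply: h. Qed.

Definition svset A k := [set r : R | exists X, [/\ bop ip X, rank_le X k &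
   r = opnorm ip (fun v => A v - X v)]].

Lemma svset_lb A k : has_lbound (svset A k).
Proof. by exists 0 => r [X [_ _ ->]]; apply: opn_ge0. Qed.

Lemma sv_le {A X} k : bop ip X -> rank_le X k -> sv ip A k <= opnorm ip (fun v => A v - X v).
Proof.
move=> hX rX; apply: ge_inf; first exact: svset_lb.
by exists X.
Qed.

Lemma sv_ge A k m : (forall X, bop ip X -> rank_le X k -> m <= opnorm ip (fun v => A v - X v)) ->
  m <= sv ip A k.
Proof.
move=> h; apply: lb_le_inf.
  by exists (opnorm ip (fun v => A v - 0)), (fun _ => 0); split; [exact: bop_zero|exact: rank_zero|].
by move=> r [X [hX rX ->]]; apply: h.
Qed.

Lemma sv_ge0 A k : 0 <= sv ip A k.
Proof. by apply: sv_ge => X _ _; apply: opn_ge0. Qed.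

Lemma sv0 A : sv ip A 0 = opnorm ip A.
Proof.
have e : forall X, rank_le X 0 -> (fun v => A v - X v) = A.
  by move=> X rX; apply: funext => v; rewrite (rank0 rX) subr0.
apply/eqP; rewrite eq_le; apply/andP; split.
  by have := sv_le (A := A) 0 bop_zero (rank_zero 0); rewrite e //; apply: rank_zero.
by apply: sv_ge => X _ rX; rewrite e.
Qed.

Lemma sv_rank A k : bop ip A -> rank_le A k -> sv ip A k = 0.
Proof.
move=> hA rA; apply/eqP; rewrite eq_le sv_ge0 andbT.
apply: le_trans (sv_le (A:=A) k hA rA) _.
have -> : (fun v => A v - A v) = (fun _ => 0) by apply: funext => v; rewrite subrr.
by rewrite opn_zero.
Qed.

Lemma sv_compl A B k : bop ip A -> bop ip B ->
  sv ip (fun v => A (B v)) k <= opnorm ip A * sv ip B k.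
Proof.
move=> hA hB; have [a0|ap] := eqVneq (opnorm ip A) 0.
  rewrite a0 mul0r; apply: le_trans (sv_le (A := fun v => A (B v)) k bop_zero (rank_zero k)) _.
  apply: opn_le => // v; rewrite (opn_eq0 _ a0 hA) subr0 hn0 mul0r //.
have ap' : 0 < opnorm ip A by rewrite lt_neqAle eq_sym ap opn_ge0.
rewrite mulrC -ler_pdivrMr //; apply: sv_ge => X hX rX.
rewrite ler_pdivrMr // mulrC.
apply: le_trans (sv_le (A := fun v => A (B v)) k (bop_comp hA hX) (rank_compl _ _ _ hA rX)) _.
have -> : (fun v => A (B v) - A (X v)) = (fun v => A ((fun w => B w - X w) v)).
  by apply: funext => v; rewrite bopB.
by apply: opn_comp => //; apply: bop_sub.
Qed.

Lemma sv_compr A B k : bop ip A -> bop ip B ->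
  sv ip (fun v => A (B v)) k <= sv ip A k * opnorm ip B.
Proof.
move=> hA hB; have [b0|bp] := eqVneq (opnorm ip B) 0.
  rewrite b0 mulr0; apply: le_trans (sv_le (A := fun v => A (B v)) k bop_zero (rank_zero k)) _.
  apply: opn_le => // v; rewrite (opn_eq0 _ b0 hB) bop0 // subr0 hn0 mul0r //.
have bp' : 0 < opnorm ip B by rewrite lt_neqAle eq_sym bp opn_ge0.
rewrite -ler_pdivrMr //; apply: sv_ge => X hX rX.
rewrite ler_pdivrMr //.
apply: le_trans (sv_le (A := fun v => A (B v)) k (bop_comp hX hB) (rank_compr _ B _ rX)) _.
by apply: (opn_comp (A := fun w => A w - X w)) => //; apply: bop_sub.
Qed.

End SV.

Section Outer.

Lemma cmod_nsq v : cmod (ip v v) = nsq v.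
Proof. by rewrite ip_real cmod_real ger0_norm // nsq_ge0. Qed.

Lemma outer_bop x y : bop ip (outer ip x y).
Proof.
split.
  by move=> a u v; rewrite /outer ipL scalerDl scalerA.
exists (hnm y * hnm x) => v; rewrite /outer hnZ mulrAC ler_wpM2r ?hn_ge0 //.
by rewrite mulrC CS.
Qed.

Lemma outer_rank1 x y : rank_le (outer ip x y) 1.
Proof. by apply/rank1P; exists x => v; exists (ip v y). Qed.

Lemma outer_opn x y : opnorm ip (outer ip x y) = hnm x * hnm y.
Proof.
apply/eqP; rewrite eq_le; apply/andP; split.
  apply: opn_le; last by rewrite mulr_ge0 ?hn_ge0.
  move=> v; rewrite /outer hnZ. have := CS (v) y. have := hn_ge0 x. have := hn_ge0 y. have := hn_ge0 v. have := cmod_ge0 (ip v y). nra.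
have [->|nz] := eqVneq y 0; first by rewrite hn0 mulr0 opn_ge0.
have hp : 0 < hnm y by apply: hn_gt0; apply/eqP.
have := opn_bound y (outer_bop x y); rewrite /outer hnZ cmod_nsq -hn2.
by rewrite expr2 mulrAC -ler_pdivlMr // mulfK ?gt_eqF // mulrC.
Qed.

Lemma outer_comp x y u z :
  (fun v => outer ip x y (outer ip u z v)) = outer ip (ip u y *: x) z.
Proof. by apply: funext => v; rewrite /outer ipZl scalerA. Qed.

Lemma outer_nz x y : x <> 0 -> y <> 0 -> nonzero_op (outer ip x y).
Proof.
move=> hx hy; exists y; rewrite /outer ip_real => /eqP.
rewrite scaler_eq0 => /orP [/eqP h|/eqP //].
apply: hy; apply: nsq_eq0; by case: h.
Qed.

End Outer.

Section Cnorm.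
Variables (n : nat) (hpos : (0 < n)%N) (c : 'I_n -> R).
Hypothesis c_ge0 : forall i, 0 <= c i.
Local Notation c0 := (Ordinal hpos).
Local Notation N := (cnorm ip c).

Lemma cnorm_split A : N A = c c0 * opnorm ip A + \sum_(j < n | j != c0) c j * sv ip A j.
Proof. by rewrite /cnorm (bigD1 c0) //= sv0. Qed.

Lemma rest_ge0 A : 0 <= \sum_(j < n | j != c0) c j * sv ip A j.
Proof. by apply: sumr_ge0 => j _; rewrite mulr_ge0 ?sv_ge0. Qed.

Lemma cnorm_ge A : c c0 * opnorm ip A <= N A.
Proof. by rewrite cnorm_split lerDl rest_ge0. Qed.

Lemma cnorm_ge0 A : 0 <= N A.
Proof. by apply: sumr_ge0 => j _; rewrite mulr_ge0 ?sv_ge0. Qed.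

Lemma cnorm_compl A B : bop ip A -> bop ip B ->
  N (fun v => A (B v)) <= opnorm ip A * N B.
Proof.
move=> hA hB; rewrite /cnorm mulr_sumr; apply: ler_sum => j _.
by rewrite mulrCA ler_wpM2l ?sv_compl.
Qed.

Lemma cnorm_compr A B : bop ip A -> bop ip B ->
  N (fun v => A (B v)) <= N A * opnorm ip B.
Proof.
move=> hA hB; rewrite /cnorm mulr_suml; apply: ler_sum => j _.
by rewrite -mulrA ler_wpM2l ?sv_compr.
Qed.

Lemma cnorm_rank1 A : bop ip A -> rank_le A 1 -> N A = c c0 * opnorm ip A.
Proof.
move=> hA rA; rewrite cnorm_split big1 ?addr0 // => j hj.
rewrite sv_rank ?mulr0 //; apply: rank1_le => //.
by rewrite lt0n; apply: contra hj => /eqP h; apply/eqP; apply: val_inj.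
Qed.

Lemma cnorm_outer x y : N (outer ip x y) = c c0 * (hnm x * hnm y).
Proof. by rewrite cnorm_rank1 ?outer_opn //; [exact: outer_bop|exact: outer_rank1]. Qed.

End Cnorm.

Lemma scalar_half (P1 Q1 S T : R[i]) (r : R) :
  cmod (1 - P1) <= r -> cmod Q1 <= r -> cmod S <= r -> cmod (1 - T) <= r ->
  P1 * T = Q1 * S -> 1 / 2 <= r.
Proof.
move=> h1 h2 h3 h4 e.
have c1 : cmod (1 : R[i]) = 1.
  by rewrite -[1 : R[i]]/((1%:C)%C) cmod_real normr1.
have hP : 1 - r <= cmod P1.
  have := cmodD (1 - P1) P1; rewrite subrK c1; lra.
have hT : 1 - r <= cmod T.
  have := cmodD (1 - T) T; rewrite subrK c1; lra.
have em : cmod P1 * cmod T = cmod Q1 * cmod S by rewrite -!cmodM e.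
have g1 := cmod_ge0 Q1; have g2 := cmod_ge0 S; have g3 := cmod_ge0 P1; have g4 := cmod_ge0 T.
have r0 : 0 <= r by apply: le_trans (cmod_ge0 _) h2.
rewrite leNgt; apply/negP => rlt.
have hP' : 0 <= 1 - r by lra.
have A1 : (1 - r) * (1 - r) <= cmod P1 * cmod T.
  by apply: ler_pM.
have A2 : cmod Q1 * cmod S <= r * r.
  by apply: ler_pM => //; apply: cmod_ge0.
nra.
Qed.

Lemma sv1_aux {A e1 e2 p q} : bop ip A -> A e1 = p -> A e2 = q ->
  nsq p = 1 -> nsq q = 1 -> ip p q = 0 ->
  forall X, bop ip X -> rank_le X 1 ->
  1 / 2 <= opnorm ip (fun v => A v - X v) * (hnm e1 + hnm e2).
Proof.
move=> hA Ae1 Ae2 np nq pq X hX /rank1P [w hw].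
have [al hal] := hw e1; have [be hbe] := hw e2.
have hAX := bop_sub hA hX.
set E := opnorm ip (fun v => A v - X v).
have E0 : 0 <= E by apply: opn_ge0.
have hnp : hnm p = 1 by rewrite hnE np sqrtr1.
have hnq : hnm q = 1 by rewrite hnE nq sqrtr1.
have ipp : ip p p = 1 by rewrite ip_real np.
have ipq : ip q q = 1 by rewrite ip_real nq.
have qp : ip q p = 0 by rewrite ipC pq conjC0.
have b1 : hnm (p - al *: w) <= E * (hnm e1 + hnm e2).
  have := opn_bound e1 hAX; rewrite /= Ae1 hal -/E => h.
  apply: le_trans h _; rewrite ler_wpM2l // lerDl hn_ge0 //.
have b2 : hnm (q - be *: w) <= E * (hnm e1 + hnm e2).
  have := opn_bound e2 hAX; rewrite /= Ae2 hbe -/E => h.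
  apply: le_trans h _; rewrite ler_wpM2l // lerDr hn_ge0 //.
apply: (@scalar_half (al * ip w p) (al * ip w q) (be * ip w p) (be * ip w q)).
- have := CS (p - al *: w) p; rewrite ipBl ipZl ipp hnp mulr1 => h.
  by apply: le_trans h b1.
- have := CS (p - al *: w) q; rewrite ipBl ipZl pq hnq mulr1 sub0r cmodN => h.
  by apply: le_trans h b1.
- have := CS (q - be *: w) p; rewrite ipBl ipZl qp hnp mulr1 sub0r cmodN => h.
  by apply: le_trans h b2.
- have := CS (q - be *: w) q; rewrite ipBl ipZl ipq hnq mulr1 => h.
  by apply: le_trans h b2.
- by rewrite mulrACA [ip w p * _]mulrC mulrACA.
Qed.

Lemma sv1_rank A : bop ip A -> sv ip A 1 = 0 -> rank_le A 1.
Proof.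
move=> hA s0.
have [allz|] := pselect (forall v, A v = 0).
  by apply/rank1P; exists 0 => v; exists 0; rewrite allz scale0r.
move/existsNP => [v1 hv1]; set a := A v1.
have [spn|] := pselect (forall v, exists al, A v = al *: a).
  by apply/rank1P; exists a.
move/existsNP => [v2 /forallNP hv2].
have anz : a <> 0 by [].
have na : 0 < nsq a by rewrite -hn2 exprn_gt0 // hn_gt0.
set t := ((nsq a)^-1)%:C%C * ip (A v2) a.
set b := A v2 - t *: a.
have bnz : b <> 0.
  by move=> b0; apply: (hv2 t); apply/eqP; rewrite -subr_eq0; apply/eqP.
have ba : ip b a = 0.
  rewrite /b ipBl ipZl ip_real /t mulrAC -rmorphM /= mulVf ?gt_eqF //.
  by rewrite mul1r subrr.
have Ab : A (v2 - t *: v1) = b by rewrite bopB // bopZ.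
have nb : 0 < nsq b by rewrite -hn2 exprn_gt0 // hn_gt0.
have hna : 0 < hnm a by apply: hn_gt0.
have hnb : 0 < hnm b by apply: hn_gt0.
set e1 := ((hnm a)^-1)%:C%C *: v1.
set e2 := ((hnm b)^-1)%:C%C *: (v2 - t *: v1).
set p := ((hnm a)^-1)%:C%C *: a.
set q := ((hnm b)^-1)%:C%C *: b.
have Ae1 : A e1 = p by rewrite bopZ.
have Ae2 : A e2 = q by rewrite bopZ // Ab.
have nunit : forall x, 0 < hnm x -> nsq (((hnm x)^-1)%:C%C *: x) = 1.
  move=> x hx; rewrite nsqZ cmod_real ger0_norm ?invr_ge0 ?hn_ge0 // -hn2.
  by rewrite -exprMn mulVf ?gt_eqF // expr1n.
have pq : ip p q = 0.
  by rewrite /p /q ipZl ipZr ipC ba conjC0 !mulr0.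
have key := sv1_aux (A:=A) hA Ae1 Ae2 (nunit a hna) (nunit b hnb) pq.
have m0 : 0 < hnm e1 + hnm e2.
  apply: lt_le_trans (_ : 0 < hnm e1) _; last by rewrite lerDl hn_ge0.
  apply: hn_gt0 => e0; have := nunit a hna; rewrite -/p -Ae1 e0 bop0 // nsq0.
  by move/eqP; rewrite eq_sym oner_eq0.
have : (1 / 2) / (hnm e1 + hnm e2) <= sv ip A 1.
  apply: sv_ge => X hX rX; rewrite ler_pdivrMr //; exact: (key X hX rX).
rewrite s0 => h; have : 0 < (1 / 2) / (hnm e1 + hnm e2) by apply: divr_gt0 => //; lra.
lra.
Qed.

Definition epsn (k : nat) : R := (k.+1%:R)^-1.

Lemma epsn_gt0 k : 0 < epsn k.
Proof. by rewrite /epsn invr_gt0 ltr0n. Qed.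

Lemma epsn_mono {N m} : (N <= m)%N -> epsn m <= epsn N.
Proof.
move=> h; rewrite /epsn lef_pV2 ?posrE ?ltr0n // ler_nat ltnS //.
Qed.

Lemma epsn_small {x : R} : 0 < x -> exists N, epsn N < x.
Proof. by move=> x0; have [k hk] := ltr_add_invr x0; exists k; rewrite add0r in hk. Qed.

Lemma lt_sqr_nn (a b : R) : 0 <= a -> 0 <= b -> a ^+ 2 < b ^+ 2 -> a < b.
Proof. move=> a0 b0 h; rewrite ltNge; apply/negP => h'; nra. Qed.

Lemma nsqN v : nsq (- v) = nsq v.
Proof. by rewrite ipNl ipNr opprK. Qed.

Lemma paral p q : nsq (p - q) + nsq (p + q) = 2 * nsq p + 2 * nsq q.
Proof.
rewrite !nsqD nsqN ipNr.
have -> : complex.Re (- ip p q) = - complex.Re (ip p q).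
  by case: (ip p q) => a b.
lra.
Qed.

Lemma half_id {p q v0 k1 k2 : V} : p = v0 - k1 -> q = v0 - k2 ->
  v0 - ((2^-1 : R)%:C)%C *: (k1 + k2) = ((2^-1 : R)%:C)%C *: (p + q).
Proof.
move=> -> ->; rewrite addrACA -opprD scalerBr; congr (_ - _).
rewrite scalerDr -scalerDl.
have -> : ((2^-1 : R)%:C + (2^-1 : R)%:C)%C = 1 :> R[i].
  by rewrite -rmorphD /=; congr (_%:C)%C; lra.
by rewrite scale1r.
Qed.

Lemma ortho_var (z k : V) (D : R) : nsq z <= D ->
  (forall t : R[i], D <= nsq (z - t *: k)) -> ip z k = 0.
Proof.
move=> hz ht; set g := cmod (ip z k) ^+ 2.
have g0 : 0 <= g by rewrite sqr_ge0.
have nk := nsq_ge0 k.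
have key : forall s : R, 0 < s -> 2 * g <= s * g * nsq k.
  move=> s s0; have := ht ((s%:C)%C * ip z k).
  rewrite -scaleNr nsqD nsqZ cmodN cmodM cmod_real (ger0_norm (ltW s0)) ipZr.
  rewrite rmorphN rmorphM /= conj_Creal; last by apply/complex_realP; exists s.
  rewrite mulNr -mulrA [(ip z k)^* * _]mulrC mul_conj -rmorphM /= -/g => h.
  rewrite exprMn -/g in h.
  have e1 : s ^+ 2 * g * nsq k = s * (s * g * nsq k) by ring.
  rewrite e1 in h.
  have : 0 <= s * (s * g * nsq k - 2 * g) by rewrite mulrBr; lra.
  by rewrite pmulr_rge0 // subr_ge0.
have s0 : 0 < (nsq k + 1)^-1 :> R by rewrite invr_gt0; lra.
have := key _ s0.
have h1 : (nsq k + 1)^-1 * nsq k <= 1.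
  by rewrite mulrC ler_pdivrMr ?mul1r; lra.
move=> h2; have : g <= 0.
  have : (nsq k + 1)^-1 * g * nsq k <= g.
    by rewrite mulrAC -[X in _ <= X]mul1r ler_wpM2r.
  lra.
move=> gle; have : g = 0 by apply/eqP; rewrite eq_le gle g0.
by move/eqP; rewrite sqrf_eq0 => /eqP /cmod_eq0.
Qed.

Lemma riesz (Hc : hcomplete ip) (f : V -> R[i]) :
  (forall a u v, f (a *: u + v) = a * f u + f v) ->
  (exists K, forall v, cmod (f v) <= K * hnm v) ->
  exists y, forall v, f v = ip v y.
Proof.
move=> fl [K0 hK0].
have f0 : f 0 = 0.
  by have := fl 1 0 0; rewrite scale1r addr0 mul1r => h; apply: (addrI (f 0)); rewrite addr0 -h.
have fZ : forall a u, f (a *: u) = a * f u.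
  by move=> a u; rewrite -[a *: u]addr0 fl f0 addr0.
have fD : forall u v, f (u + v) = f u + f v.
  by move=> u v; rewrite -[u]scale1r fl mul1r scale1r.
have fB : forall u v, f (u - v) = f u - f v.
  by move=> u v; rewrite fD -scaleN1r fZ mulN1r.
set K := `|K0| + 1.
have K0p : 0 < K by rewrite /K ltr_pwDr ?normr_ge0.
have hK : forall v, cmod (f v) <= K * hnm v.
  move=> v; apply: le_trans (hK0 v) _; rewrite ler_wpM2r ?hn_ge0 //.
  by apply: le_trans (ler_norm K0) _; rewrite lerDl.
have [fz|] := pselect (forall v, f v = 0).
  by exists 0 => v; rewrite fz ip0r.
move/existsNP => [v0 fv0].
set S := [set r : R | exists k, f k = 0 /\ r = nsq (v0 - k)].
have Sn : S !=set0 by exists (nsq (v0 - 0)), 0.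
have Slb : has_lbound S by exists 0 => r [k [_ ->]]; apply: nsq_ge0.
set D := inf S.
have Dle : forall k, f k = 0 -> D <= nsq (v0 - k).
  by move=> k fk; apply: ge_inf => //; exists k.
have D0 : 0 <= D by apply: lb_le_inf => // r [k [_ ->]]; apply: nsq_ge0.
have ex : forall m : nat, exists k, f k = 0 /\ nsq (v0 - k) < D + epsn m.
  move=> m; have : inf S < D + epsn m by rewrite ltrDl epsn_gt0.
  by move/(inf_lt Sn) => [r [k [fk ->]] lt]; exists k.
have [ks hks] := choice ex.
have cauchy : forall m k, nsq (ks m - ks k) <= 2 * epsn m + 2 * epsn k.
  move=> m k; have [fm hm] := hks m; have [fk hk] := hks k.
  have := paral (v0 - ks k) (v0 - ks m).
  have -> : v0 - ks k - (v0 - ks m) = ks m - ks k.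
    by rewrite opprB addrC addrA subrK.
  have hmid := half_id (erefl (v0 - ks k)) (erefl (v0 - ks m)).
  have fmid : f (((2^-1 : R)%:C)%C *: (ks k + ks m)) = 0 by rewrite fZ fD fm fk addr0 mulr0.
  have := Dle _ fmid; rewrite hmid nsqZ cmod_real ger0_norm ?invr_ge0 ?ler0n //.
  lra.
have hcs : forall e : R, 0 < e -> exists N : nat, forall m k : nat,
    (N <= m)%N -> (N <= k)%N -> hnm (ks m - ks k) < e.
  move=> e e0; have e2 : 0 < e ^+ 2 / 4 by apply: divr_gt0; rewrite ?exprn_gt0 //.
  have [N hN] := epsn_small e2; exists N => m k hm hk.
  apply: lt_sqr_nn; rewrite ?hn_ge0 ?ltW // hn2.
  have := cauchy m k; have := epsn_mono hm; have := epsn_mono hk.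
  move: hN; rewrite ltr_pdivlMr //; lra.
have [k0 hk0] := Hc ks hcs.
have fk0 : f k0 = 0.
  apply: cmod_eq0; apply/eqP; rewrite eq_le cmod_ge0 andbT.
  apply/ler_addgt0Pr => e e0; rewrite add0r.
  have [N hN] := hk0 (e / K) (divr_gt0 e0 K0p).
  have := hN N (leqnn N); have [fN _] := hks N => hl.
  have -> : f k0 = f (k0 - ks N) by rewrite fB fN subr0.
  apply: le_trans (hK _) _; rewrite hn_sym.
  by rewrite -ler_pdivlMl // mulrC ltW.
have Dz : nsq (v0 - k0) <= D.
  rewrite leNgt; apply/negP => hlt.
  set h := hnm (v0 - k0).
  have h2 : h ^+ 2 = nsq (v0 - k0) by rewrite hn2.
  set dl := (nsq (v0 - k0) - D) / 2.
  have dl0 : 0 < dl by apply: divr_gt0 => //; rewrite subr_gt0.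
  set s := Num.sqrt (D + dl).
  have s2 : s ^+ 2 = D + dl by rewrite sqr_sqrtr //; lra.
  have s0 : 0 <= s by apply: sqrtr_ge0.
  have sh : s < h by apply: lt_sqr_nn; rewrite ?hn_ge0 // s2 h2 /dl; lra.
  have hs2 : 0 < (h - s) / 2 by apply: divr_gt0 => //; rewrite subr_gt0.
  have [N1 hN1] := hk0 _ hs2.
  have [N2 hN2] := epsn_small dl0.
  set N := maxn N1 N2.
  have [_ hvN] := hks N.
  have eN : epsn N <= epsn N2 by apply: epsn_mono; rewrite leq_maxr.
  have b1 : hnm (v0 - ks N) <= s.
    by apply: le_sqr_nn; rewrite ?hn_ge0 // hn2 s2; lra.
  have b2 : hnm (ks N - k0) < (h - s) / 2 by apply: hN1; rewrite leq_maxl.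
  have := hn_tri v0 (ks N) k0; rewrite -/h.
  lra.
set z := v0 - k0.
have fz : f z != 0 by rewrite /z fB fk0 subr0; apply/eqP.
have orth : forall k, f k = 0 -> ip z k = 0.
  move=> k fk; apply: (ortho_var z k D) => // t.
  have : f (k0 + t *: k) = 0 by rewrite fD fZ fk0 fk mulr0 addr0.
  by move/Dle; rewrite /z opprD addrA.
have zr : nsq z != 0.
  apply/eqP => /nsq_eq0 z0; move: fz; rewrite z0 f0 eqxx //.
exists ((((nsq z)^-1)%:C%C * (f z)^* ) *: z); move=> v.
set k := v - (f v / f z) *: z.
have fk : f k = 0 by rewrite /k fB fZ divfK // subrr.
have ikz : ip k z = 0 by rewrite ipC orth // conjC0.
have e1 : ip v z = f v / f z * (nsq z)%:C%C.
  by move: ikz; rewrite /k ipBl ipZl ip_real => /eqP; rewrite subr_eq0 => /eqP.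
rewrite ipZr rmorphM /= conjCK conj_Creal; last by apply/complex_realP; exists (nsq z)^-1.
rewrite e1 fmorphV /=.
have zc : (nsq z)%:C%C != 0 :> R[i].
  by apply: contra zr => /eqP [->].
by field; apply/andP.
Qed.

Lemma rank1_outer (Hc : hcomplete ip) A : bop ip A -> rank_le A 1 ->
  exists x y, A = outer ip x y.
Proof.
move=> hA /rank1P [w hw].
have [w0|wnz] := eqVneq w 0.
  exists 0, 0; apply: funext => v; have [a ->] := hw v.
  by rewrite /outer w0 !scaler0.
have nw : 0 < nsq w by rewrite -hn2 exprn_gt0 // hn_gt0 //; apply/eqP.
set f := fun v => ip (A v) w * ((nsq w)^-1)%:C%C.
have Af : forall v, A v = f v *: w.
  move=> v; have [a ha] := hw v; rewrite /f ha ipZl ip_real -mulrA -rmorphM /=.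
  by rewrite mulfV ?gt_eqF // mulr1.
have fl : forall a u v, f (a *: u + v) = a * f u + f v.
  by move=> a u v; rewrite /f bopZD // ipL mulrDl mulrA.
have fb : exists K, forall v, cmod (f v) <= K * hnm v.
  exists (opnorm ip A * hnm w * (nsq w)^-1) => v.
  rewrite /f cmodM cmod_real ger0_norm ?invr_ge0 ?nsq_ge0 //.
  rewrite mulrAC ler_wpM2r ?invr_ge0 ?nsq_ge0 //.
  apply: le_trans (CS _ _) _; rewrite mulrAC ler_wpM2r ?hn_ge0 //.
  exact: opn_bound.
have [y hy] := riesz Hc f fl fb.
by exists w, y; apply: funext => v; rewrite Af hy.
Qed.

Lemma nz_vec (n : nat) (hn : (0 < n)%N) :
  hdim_ge V n -> exists e : V, e <> 0.
Proof.
case=> w hw; exists (w (Ordinal hn)) => e0.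
set a := (fun i : 'I_n => if i == Ordinal hn then (1 : R[i]) else 0).
have hs : \sum_(i < n) a i *: w i = 0.
  rewrite (bigD1 (Ordinal hn)) //= /a eqxx e0 scaler0 add0r big1 // => i /negPf ->.
  by rewrite scale0r.
have := hw a hs (Ordinal hn); rewrite /a eqxx => /eqP.
by rewrite oner_eq0.
Qed.

Lemma main_aux (Hcomp : hcomplete ip)
  (n : nat) (hn : (0 < n)%N) (Hdim : hdim_ge V n) (c : 'I_n -> R) :
  let c1 := c (Ordinal hn) in
  let desc_pos := (forall i j : 'I_n, (i <= j)%N -> c j <= c i) /\
                  (forall i : 'I_n, 0 < c i) in
  let N := cnorm ip c in
  (desc_pos ->
     ((forall A B : V -> V, bop ip A -> bop ip B ->
         N (fun v => A (B v)) <= N A * N B) <-> 1 <= c1)) /\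
  (desc_pos ->
     ((forall A : V -> V, bop ip A -> rank_one A -> N A = sv ip A 0) <-> c1 = 1)) /\
  (desc_pos -> 1 <= c1 ->
     ((exists A B : V -> V, [/\ bop ip A, bop ip B, nonzero_op A, nonzero_op B &
         N (fun v => A (B v)) = N A * N B]) <-> c1 = 1)) /\
  ((forall i : 'I_n, c i = if val i == 0%N then 1 else 0) ->
     forall A B : V -> V, bop ip A -> bop ip B -> nonzero_op A -> nonzero_op B ->
       (N (fun v => A (B v)) = N A * N B <->
        sv ip (fun v => A (B v)) 0 = sv ip A 0 * sv ip B 0)) /\
  (forall h2 : (1 < n)%N, desc_pos -> c1 = 1 -> 0 < c (Ordinal h2) ->
     forall A B : V -> V, bop ip A -> bop ip B -> nonzero_op A -> nonzero_op B ->
       (N (fun v => A (B v)) = N A * N B <->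
        exists x y z : V, [/\ x <> 0, y <> 0, z <> 0,
          A = outer ip x y & B = outer ip y z])).
Proof.
move=> c1 dp N; subst c1 dp N.
have [e enz] := nz_vec n hn Hdim.
set c0 := Ordinal hn.
set P := outer ip e e.
have hP : bop ip P by apply: outer_bop.
have he : 0 < hnorm ip e by apply: hn_gt0.
have PP : (fun v => P (P v)) = outer ip (ip e e *: e) e by apply: outer_comp.
have hnee : hnorm ip (ip e e *: e) = hnorm ip e ^+ 3.
  by rewrite hnZ cmod_nsq -(hn2 e) -exprSr.
have NPP : cnorm ip c (fun v => P (P v)) = c c0 * hnorm ip e ^+ 4.
  by rewrite PP cnorm_outer // hnee -exprSr.
have NP : cnorm ip c P = c c0 * hnorm ip e ^+ 2.
  by rewrite cnorm_outer // -expr2.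
have opP : opnorm ip P = hnorm ip e ^+ 2 by rewrite outer_opn // expr2.
have nzP : nonzero_op P by apply: outer_nz.
have h4 : 0 < hnorm ip e ^+ 4 by rewrite exprn_gt0.
have h2e : 0 < hnorm ip e ^+ 2 by rewrite exprn_gt0.
split; [|split; [|split; [|split]]].
-
  move=> [_ cpos]; have c0p := cpos c0; have cge0 : forall i, 0 <= c i by move=> i; apply: ltW.
  split.
    move=> h; have := h P P hP hP; rewrite NPP NP => h'.
    have : c c0 * hnorm ip e ^+ 4 <= (c c0) ^+ 2 * hnorm ip e ^+ 4.
      have E : c c0 * hnorm ip e ^+ 2 * (c c0 * hnorm ip e ^+ 2) = c c0 ^+ 2 * hnorm ip e ^+ 4.
        by ring.
      by rewrite -E.
    by rewrite ler_pM2r // expr2 ler_pMr.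
  move=> c1ge A B hA hB.
  apply: le_trans (cnorm_compl _ _ cge0 _ _ hA hB) _.
  rewrite ler_wpM2r ?(cnorm_ge0 _ _ cge0) //.
  apply: le_trans (cnorm_ge _ hn _ cge0 A).
  by rewrite ler_peMl ?opn_ge0.
-
  move=> [_ cpos]; split.
    move=> h; have := h P hP (conj (outer_rank1 _ _) nzP).
    rewrite NP sv0 opP => h'.
    have : (c c0 - 1) * hnorm ip e ^+ 2 = 0 by rewrite mulrBl h' mul1r subrr.
    by move/eqP; rewrite mulf_eq0 (gt_eqF h2e) orbF subr_eq0 => /eqP.
  move=> c1e A hA [rA _]; rewrite cnorm_rank1 // c1e mul1r sv0 //.
-
  move=> [_ cpos] c1ge; have cge0 : forall i, 0 <= c i by move=> i; apply: ltW.
  split; last first.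
    move=> c1e; exists P, P; split => //.
    by rewrite NPP NP c1e !mul1r; ring.
  move=> [A [B [hA hB nA nB eq]]].
  have oA := opn_gt0 hA nA; have oB := opn_gt0 hB nB.
  have := cnorm_compl _ _ cge0 _ _ hA hB; have := cnorm_ge _ hn _ cge0 A; have := cnorm_ge _ hn _ cge0 B.
  rewrite eq => h1 h2 h3.
  have NBp : 0 < cnorm ip c B by apply: lt_le_trans h1; rewrite mulr_gt0 // cpos.
  apply/eqP; rewrite eq_le c1ge andbT.
  rewrite leNgt; apply/negP => c1gt.
  have : opnorm ip A * cnorm ip c B < cnorm ip c A * cnorm ip c B.
    rewrite ltr_pM2r //; apply: lt_le_trans h2.
    by rewrite -[X in X < _]mul1r ltr_pM2r.
  lra.
-
  move=> cE A B hA hB nA nB.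
  have NE : forall X, cnorm ip c X = sv ip X 0.
    move=> X; rewrite cnorm_split // big1 ?addr0.
      by rewrite cE /= mul1r sv0.
    move=> j hj; rewrite cE ifF ?mul0r //; apply/negP => /eqP h; move/negP: hj; apply.
    by apply/eqP; apply: val_inj.
  by rewrite !NE.
-
  move=> h2 [_ cpos] c1e c2p A B hA hB nA nB.
  have cge0 : forall i, 0 <= c i by move=> i; apply: ltW.
  set c2 := Ordinal h2.
  have c20 : c2 != c0 by apply/eqP => /(congr1 val).
  have restge : forall X, c c2 * sv ip X 1 <= \sum_(j < n | j != c0) c j * sv ip X j.
    move=> X; rewrite (bigD1 c2) //= lerDl; apply: sumr_ge0 => j _.
    by rewrite mulr_ge0 ?sv_ge0.
  have oA := opn_gt0 hA nA; have oB := opn_gt0 hB nB.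
  have NA0 : 0 < cnorm ip c A.
    by apply: lt_le_trans (cnorm_ge _ hn _ cge0 A); rewrite mulr_gt0 // cpos.
  have NB0 : 0 < cnorm ip c B.
    by apply: lt_le_trans (cnorm_ge _ hn _ cge0 B); rewrite mulr_gt0 // cpos.
  split.
  + move=> eq.
    have svA : sv ip A 1 = 0.
      have h1 := cnorm_compl _ _ cge0 _ _ hA hB; rewrite eq ler_pM2r // in h1.
      have := cnorm_split _ hn c A; rewrite -/c0 c1e mul1r => hs.
      have := restge A; have := sv_ge0 A 1.
      nra.
    have svB : sv ip B 1 = 0.
      have h1 := cnorm_compr _ _ cge0 _ _ hA hB; rewrite eq ler_pM2l // in h1.
      have := cnorm_split _ hn c B; rewrite -/c0 c1e mul1r => hs.
      have := restge B; have := sv_ge0 B 1.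
      nra.
    have [x [y Ae]] := rank1_outer Hcomp _ hA (sv1_rank _ hA svA).
    have [u [z Be]] := rank1_outer Hcomp _ hB (sv1_rank _ hB svB).
    have nzl : forall p q, nonzero_op (outer ip p q) -> p <> 0 /\ q <> 0.
      move=> p q [v hv]; split => h0; apply: hv; rewrite /outer h0.
        by rewrite scaler0.
      by rewrite ip0r scale0r.
    have [xnz ynz] : x <> 0 /\ y <> 0 by apply: nzl; rewrite -Ae.
    have [unz znz] : u <> 0 /\ z <> 0 by apply: nzl; rewrite -Be.
    move: eq; rewrite Ae Be outer_comp !(cnorm_outer _ hn) -/c0 c1e !mul1r hnZ => eq.
    have hx := hn_gt0 _ xnz; have hy := hn_gt0 _ ynz.
    have hu := hn_gt0 _ unz; have hz := hn_gt0 _ znz.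
    have ceq : cmod (ip u y) = hnorm ip u * hnorm ip y.
      have : (cmod (ip u y) - hnorm ip u * hnorm ip y) * (hnorm ip x * hnorm ip z) = 0.
        have E1 : cmod (ip u y) * (hnorm ip x * hnorm ip z) = hnorm ip x * hnorm ip y * (hnorm ip u * hnorm ip z).
          by rewrite -eq; ring.
        by rewrite mulrBl E1; ring.
      have hxz : hnorm ip x * hnorm ip z != 0 by rewrite mulf_neq0 ?gt_eqF.
      by move/eqP; rewrite mulf_eq0 (negbTE hxz) orbF subr_eq0 => /eqP.
    have ue := CS_eq u y ynz ceq; move: ue; set t := _ * ip u y => ue.
    have tnz : t != 0.
      by apply/eqP => t0; apply: unz; rewrite ue t0 scale0r.
    exists x, y, (t^* *: z); split => //.
      by apply/eqP; rewrite scaler_eq0 conjC_eq0 negb_or tnz /=; apply/eqP.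
    by apply: funext => v; rewrite /outer {1}ue ipZr conjCK scalerA mulrC.
  + move=> [x [y [z [hx hy hz Ae Be]]]].
    rewrite Ae Be outer_comp !(cnorm_outer _ hn) -/c0 c1e !mul1r hnZ cmod_nsq -(hn2 y).
    ring.
Qed.

End IP.

Theorem corollary2p7 (R : realType) (V : lmodType R[i]) (ip : V -> V -> R[i])
  (Hip : inner_product ip) (Hcomp : hcomplete ip)
  (n : nat) (hn : (0 < n)%N) (Hdim : hdim_ge V n) (c : 'I_n -> R) :
  let c1 := c (Ordinal hn) in
  let desc_pos := (forall i j : 'I_n, (i <= j)%N -> c j <= c i) /\
                  (forall i : 'I_n, 0 < c i) in
  let N := cnorm ip c in
  (* (a) *)
  (desc_pos ->
     ((forall A B : V -> V, bop ip A -> bop ip B ->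
         N (fun v => A (B v)) <= N A * N B) <-> 1 <= c1)) /\
  (* (b) *)
  (desc_pos ->
     ((forall A : V -> V, bop ip A -> rank_one A -> N A = sv ip A 0) <-> c1 = 1)) /\
  (* (c) *)
  (desc_pos -> 1 <= c1 ->
     ((exists A B : V -> V, [/\ bop ip A, bop ip B, nonzero_op A, nonzero_op B &
         N (fun v => A (B v)) = N A * N B]) <-> c1 = 1)) /\
  (* (d) *)
  ((forall i : 'I_n, c i = if val i == 0%N then 1 else 0) ->
     forall A B : V -> V, bop ip A -> bop ip B -> nonzero_op A -> nonzero_op B ->
       (N (fun v => A (B v)) = N A * N B <->
        sv ip (fun v => A (B v)) 0 = sv ip A 0 * sv ip B 0)) /\
  (* (e) *)
  (forall h2 : (1 < n)%N, desc_pos -> c1 = 1 -> 0 < c (Ordinal h2) ->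
     forall A B : V -> V, bop ip A -> bop ip B -> nonzero_op A -> nonzero_op B ->
       (N (fun v => A (B v)) = N A * N B <->
        exists x y z : V, [/\ x <> 0, y <> 0, z <> 0,
          A = outer ip x y & B = outer ip y z])).
Proof. exact: main_aux. Qed.
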